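(* If a $(v,[k_1,k_2,k_3],\lambda)$ Hadamard partitioned difference family exists, then no prime divisor of $(2k_1+1)(2k_2+1)(2k_3+1)$ is congruent to $5$ modulo $6$.
   Context: $G$ is a finite group of order $v$ written additively, with difference $x-y:=x+(-y)$. For $B\subseteq G$, $\Delta B$ is the multiset $\{x-y: x,y\in B, x\neq y\}$; for $\mathcal{F}=\{B_1,\dots,B_t\}$, $\Delta\mathcal{F}$ is the multiset union of the $\Delta B_i$. A $(v,[k_1,\dots,k_t],\lambda)$ partitioned difference family (PDF) is a collection $\{B_1,\dots,B_t\}$ of subsets partitioning some group $G$ of order $v$ with $|B_i|=k_i$ such that $\Delta\mathcal{F}$ contains every non-zero element of $G$ exactly $\lambda$ times. It is Hadamard (HPDF) if $v=2\lambda$. *)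

(* Defs.v *)
From mathcomp Require Import all_boot all_fingroup.
Set Implicit Arguments. Unset Strict Implicit. Unset Printing Implicit Defensive.
Local Open Scope group_scope.

(* The ambient group G of the paper is the whole finite group gT (order v = #|gT|).
   The paper writes G additively with x - y := x + (-y); in mathcomp's
   multiplicative notation this difference is x * y^-1 and 0 is 1. *)

Definition delta_count (gT : finGroupType) (B : {set gT}) (g : gT) : nat :=
  #|[set p : gT * gT | [&& p.1 \in B, p.2 \in B, p.1 != p.2 & p.1 * p.2^-1 == g]]|.

Definition is_PDF (gT : finGroupType) (t : nat) (B : 'I_t -> {set gT})
  (v : nat) (k : 'I_t -> nat) (lambda : nat) : Prop :=
  [/\ #|[set: gT]| = v,
      (forall i, #|B i| = k i),
      (forall i j, i != j -> [disjoint B i & B j]),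
      (forall x : gT, exists i, x \in B i) &
      (forall g : gT, g != 1 -> \sum_(i < t) delta_count (B i) g = lambda)].

Definition is_HPDF (gT : finGroupType) (t : nat) (B : 'I_t -> {set gT})
  (v : nat) (k : 'I_t -> nat) (lambda : nat) : Prop :=
  is_PDF B v k lambda /\ v = (2 * lambda)%N.

(* Main.v *)
Require Import Defs.
From mathcomp Require Import all_boot all_fingroup.
From mathcomp Require Import all_order all_algebra all_field.
From mathcomp Require Import ring zify.
Set Implicit Arguments. Unset Strict Implicit. Unset Printing Implicit Defensive.

Section NT.
Import GRing.Theory.
Local Open Scope ring_scope.
Lemma nt p x : prime p -> (p %% 6 = 5)%N -> (p %| 4*x^2+3)%N -> False.
Proof.
move=> pp p6 hd.
have chp := pchar_Fp pp.
have p5 : (5 <= p)%N by have := ltn_pmod p (isT : (0 < 6)%N); lia.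
have nz n : (0 < n < 5)%N -> (n%:R : 'F_p) != 0.
  move=> hn; rewrite -(dvdn_pcharf chp); apply/negP=> /dvdn_leq; lia.
move: hd; rewrite (dvdn_pcharf chp) natrD natrM natrX => /eqP E.
set y : 'F_p := x%:R in E.
have n2 : (2 : 'F_p) != 0 by apply: nz.
have n3 : (3 : 'F_p) != 0 by apply: nz.
set w : 'F_p := (2 * y - 1) / 2.
have hw : w ^+ 2 + w + 1 = 0.
  have : 4 * (w ^+ 2 + w + 1) = 4%:R * y ^+ 2 + 3%:R by rewrite /w; field.
  rewrite E => /eqP; rewrite mulf_eq0 => /orP [h|/eqP //].
  by move: (nz 4 isT); rewrite h.
have w3 : w ^+ 3 = 1.
  apply/eqP; rewrite -subr_eq0.
  have -> : w ^+ 3 - 1 = (w - 1) * (w ^+ 2 + w + 1) by ring.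
  by rewrite hw mulr0.
have pe : p = (3 * (2 * (p %/ 6) + 1) + 2)%N by have := divn_eq p 6; lia.
have wp : w ^+ (3 * (2 * (p %/ 6) + 1) + 2) = w.
  by rewrite -pe -{2}(expf_card w) card_Fp.
move: wp; rewrite exprD exprM w3 expr1n mul1r => /eqP.
rewrite -subr_eq0.
have -> : w ^+ 2 - w = w * (w - 1) by ring.
rewrite mulf_eq0 => /orP [/eqP w0| ].
  by move: hw; rewrite w0 /= expr0n /= !add0r => /eqP; rewrite oner_eq0.
rewrite subr_eq0 => /eqP w1.
move: hw; rewrite w1 expr1n => h.
have h3 : (3:'F_p) = 0 by rewrite -h; ring.
by rewrite h3 eqxx in n3.
Qed.
End NT.
Lemma eqk a b x l : a*(a-1)+b*(b-1)+(b+x)*(b+x-1) = (a+(b+(b+x))-1) * l -> a+(b+(b+x)) = 2* l ->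
  4*x^2+3+(2*a+1)*(2*a) = (2*a+1)*(8*b+4*x+3).
Proof.
move=> H1 H2.
have e1 : a*(a-1) = a*a - a by rewrite mulnBr muln1.
have e2 : b*(b-1) = b*b - b by rewrite mulnBr muln1.
have e3 : (b+x)*(b+x-1) = (b+x)*(b+x) - (b+x) by rewrite mulnBr muln1.
have e4 : (a+(b+(b+x))-1) * l = (a+(b+(b+x))) * l - l by rewrite mulnBl mul1n.
rewrite e1 e2 e3 e4 H2 in H1.
have sq n : n <= n*n by case: n => // n; rewrite leq_pmulr.
have f1 := sq a; have f2 := sq b; have f3 := sq (b+x).
have f4 := sq l.
have HQ : a*a+b*b+(b+x)*(b+x) + l = 2 * l * l + 2 * l by lia.
have HQ2 : 2*(a*a+b*b+(b+x)*(b+x)) = (a+(b+(b+x)))*(a+(b+(b+x))) + (a+(b+(b+x))).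
  rewrite H2; lia.
lia.
Qed.
Lemma dc1 (gT : finGroupType) (B : {set gT}) : delta_count B 1 = 0.
Proof.
apply/eqP; rewrite cards_eq0; apply/eqP/setP => p; rewrite !inE.
apply/negP => /and4P [_ _ ne /eqP e].
by move: ne; rewrite -(mulgKV p.2 p.1) e mul1g eqxx.
Qed.

Lemma dc_sum (gT : finGroupType) (B : {set gT}) :
  \sum_g delta_count B g = #|B| * (#|B| - 1).
Proof.
pose P := fun p : gT * gT => [&& p.1 \in B, p.2 \in B & p.1 != p.2].
transitivity (\sum_(p | P p) 1).
  rewrite (partition_big (fun p : gT * gT => (p.1 * p.2^-1)%g) predT) //=.
  apply: eq_bigr => g _; rewrite /delta_count -sum1dep_card.
  by apply: eq_bigl => p; rewrite /P !andbA.
rewrite -(pair_big_dep (fun x => x \in B) (fun x y => (y \in B) && (x != y)) (fun _ _ => 1)).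
rewrite -sum_nat_const; apply: eq_bigr => x xB.
rewrite (eq_bigl (fun y => y \in B :\ x)); last first.
  by move=> y; rewrite !inE andbC eq_sym.
by rewrite sum1_card (cardsD1 x B) xB add1n subn1.
Qed.

Lemma part_sum (gT : finGroupType) (t : nat) (B : 'I_t -> {set gT}) v k l :
  is_PDF B v k l -> \sum_i #|B i| = #|gT|.
Proof.
case=> _ _ dis cov _.
rewrite -sum1_card.
under eq_bigr do rewrite -sum1_card.
rewrite (exchange_big_dep predT) //=.
apply: eq_bigr => x _.
have [i xi] := cov x.
rewrite (bigD1 i) //= big1 // => j /andP [xj ji].
by move: (dis _ _ ji) => /disjoint_setI0 /setP /(_ x); rewrite !inE xj xi.
Qed.

Lemma sum3 (F : 'I_3 -> nat) : \sum_i F i = F ord0 + F (inord 1) + F (inord 2).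
Proof.
rewrite !big_ord_recl big_ord0 addn0 addnA; congr (_ + F _ + F _); by apply: val_inj => /=; rewrite inordK.
Qed.

Lemma main_eq (gT : finGroupType) (t : nat) (B : 'I_t -> {set gT}) v k l :
  is_PDF B v k l -> \sum_i k i * (k i - 1) = (v - 1) * l.
Proof.
move=> H; have [cv ck _ _ dl] := H.
transitivity (\sum_(g | g != 1%g) \sum_i delta_count (B i) g).
  rewrite exchange_big; apply: eq_bigr => i _.
  by rewrite -ck -dc_sum (bigD1 1%g) //= dc1.
rewrite (eq_bigr (fun _ => l)) ?sum_nat_const; last by move=> g /dl.
by rewrite cardC1 -cv subn1 cardsT.
Qed.

Lemma key p a b c l : prime p -> p %% 6 = 5 ->
  a*(a-1)+b*(b-1)+c*(c-1) = (a+(b+c)-1) * l -> a+(b+c) = 2* l -> p %| 2*a+1 -> False.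
Proof.
move=> pp p6.
wlog bc : b c / b <= c.
  move=> W; case: (leqP b c) => h; first exact: W.
  move=> H1 H2; apply: (W c b); first exact: ltnW.
    lia.
  lia.
move=> H1 H2 hd.
rewrite -(subnKC bc) in H1 H2.
have E := eqk H1 H2.
apply: (nt (x := c - b) pp p6).
by rewrite -(dvdn_addl (4*(c-b)^2+3) (dvdn_mulr (2*a) hd)) E dvdn_mulr.
Qed.

Theorem corollary3p3 (gT : finGroupType) (B : 'I_3 -> {set gT})
  (v : nat) (k : 'I_3 -> nat) (lambda : nat) :
  is_HPDF B v k lambda ->
  forall p : nat, prime p ->
    p %| (2 * k ord0 + 1) * (2 * k (inord 1) + 1) * (2 * k (inord 2) + 1) ->
    p %% 6 != 5.
Proof.
move=> [H vl] p pp hd; apply/eqP => p6.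
have E1 := main_eq H; rewrite sum3 in E1.
have E2 := part_sum H; rewrite sum3 in E2.
have [cv ck _ _ _] := H.
rewrite !ck -cardsT cv in E2.
move: E1 E2; set a := k ord0; set b := k (inord 1); set c := k (inord 2) => E1 E2.
rewrite !Euclid_dvdM // in hd.
case/orP: hd => [/orP [] | ] hd.
- apply: (key (b:=b) (c:=c) (l:=lambda) pp p6 _ _ hd); lia.
- apply: (key (b:=a) (c:=c) (l:=lambda) pp p6 _ _ hd); lia.
- apply: (key (b:=a) (c:=b) (l:=lambda) pp p6 _ _ hd); lia.
Qed.
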